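(* Let $A\in\mathbb{C}^{m\times n}_r$ satisfy ${\rm rank}(AA^{\sim})={\rm rank}(A^{\sim}A)={\rm rank}(A)$ and be partitioned as $A=\left(\begin{array}{cc}A_1 & A_2\\ A_3 & A_4\end{array}\right)$, where $A_1\in\mathbb{C}^{r\times r}$ is nonsingular, $A_2\in\mathbb{C}^{r\times(n-r)}$, $A_3\in\mathbb{C}^{(m-r)\times r}$, $A_4\in\mathbb{C}^{(m-r)\times(n-r)}$. Then \[ A^{\mathfrak{m}}=\left(\begin{array}{cc}A_1 & A_2\end{array}\right)^{\sim}\left[\left(\begin{array}{c}A_1\\ A_3\end{array}\right)^{\sim}A\left(\begin{array}{cc}A_1 & A_2\end{array}\right)^{\sim}\right]^{-1}\left(\begin{array}{c}A_1\\ A_3\end{array}\right)^{\sim}. \]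
   Context: The Minkowski metric matrix of order $k$ is $\left(\begin{array}{cc}1&0\\0&-I_{k-1}\end{array}\right)$; the Minkowski adjoint of $M\in\mathbb{C}^{p\times q}$ is $M^{\sim}=G_qM^*G_p$ with $G_q,G_p$ the Minkowski metric matrices of orders $q$ and $p$. The Minkowski inverse $A^{\mathfrak{m}}$ is the unique $X$ with $AXA=A$, $XAX=X$, $(AX)^{\sim}=AX$, $(XA)^{\sim}=XA$. *)

(* Defs.v *)
(* Complex field rendered as an arbitrary numClosedFieldType C
   (with conjugation Num.conj), e.g. complex numbers R[i]. *)
From HB Require Import structures.
From mathcomp Require Import all_boot all_order all_algebra.
Set Implicit Arguments. Unset Strict Implicit. Unset Printing Implicit Defensive.
Import Order.TTheory GRing.Theory Num.Theory.
Local Open Scope ring_scope.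

Definition mink_metric (C : numClosedFieldType) (k : nat) : 'M[C]_k :=
  \matrix_(i < k, j < k)
    (if i == j then (if (i : nat) == 0%N then 1 else -1) else 0).

Definition conjtr (C : numClosedFieldType) (p q : nat) (M : 'M[C]_(p, q))
  : 'M[C]_(q, p) := map_mx Num.conj (M^T).

Definition mink_adj (C : numClosedFieldType) (p q : nat) (M : 'M[C]_(p, q))
  : 'M[C]_(q, p) := mink_metric C q *m conjtr M *m mink_metric C p.

Definition is_mink_inverse (C : numClosedFieldType) (p q : nat)
  (A : 'M[C]_(p, q)) (X : 'M[C]_(q, p)) : Prop :=
  [/\ A *m X *m A = A, X *m A *m X = X,
      mink_adj (A *m X) = A *m X & mink_adj (X *m A) = X *m A].

(* Main.v *)
Require Import Defs.
From HB Require Import structures.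
From mathcomp Require Import all_boot all_order all_algebra.
Import Order.TTheory GRing.Theory Num.Theory.
Local Open Scope ring_scope.

Section Helpers.
Variable C : numClosedFieldType.

Lemma mink_metricT k : (mink_metric C k)^T = mink_metric C k.
Proof. by apply/matrixP=> i j; rewrite !mxE eq_sym; case: eqP => // ->. Qed.

Lemma mink_metric_conj k : map_mx Num.conj (mink_metric C k) = mink_metric C k.
Proof.
apply/matrixP=> i j; rewrite !mxE.
by case: (i == j); case: ((i : nat) == 0%N); rewrite ?rmorphN ?rmorph1 ?rmorph0.
Qed.

Lemma mink_metric_sq k : mink_metric C k *m mink_metric C k = 1%:M.
Proof.
have -> : mink_metric C k = diag_mx (\row_(i < k) (if (i : nat) == 0%N then 1 else -1 : C)).
  by apply/matrixP=> i j; rewrite !mxE eq_sym; case: eqP => // ->.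
rewrite mul_diag_mx; apply/matrixP=> i j; rewrite !mxE.
case: (i == j); last by rewrite mulr0.
by case: ((i : nat) == 0%N); rewrite ?mulr1 ?mulrNN ?mulr1.
Qed.

Lemma adjM p q s (M : 'M[C]_(p, q)) (N : 'M[C]_(q, s)) :
  mink_adj (M *m N) = mink_adj N *m mink_adj M.
Proof.
rewrite /mink_adj /conjtr trmx_mul (map_mxM Num.conj).
rewrite !mulmxA -[_ *m mink_metric C q *m mink_metric C q]mulmxA mink_metric_sq.
by rewrite mulmx1.
Qed.

Lemma adjK p q (M : 'M[C]_(p, q)) : mink_adj (mink_adj M) = M.
Proof.
rewrite /mink_adj /conjtr !trmx_mul !(map_mxM Num.conj) !mink_metricT !mink_metric_conj.
rewrite map_trmx trmxK.
have -> : map_mx Num.conj (map_mx Num.conj M) = M.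
  by apply/matrixP=> i j; rewrite !mxE conjCK.
by rewrite !mulmxA mink_metric_sq mul1mx -mulmxA mink_metric_sq mulmx1.
Qed.

Lemma adj1 k : mink_adj (1%:M : 'M[C]_k) = 1%:M.
Proof.
by rewrite /mink_adj /conjtr trmx1 (map_mx1 Num.conj) mulmx1 mink_metric_sq.
Qed.

Lemma adj_inv k (M : 'M[C]_k) : M \in unitmx -> mink_adj M = M ->
  mink_adj (invmx M) = invmx M.
Proof.
move=> uM hM.
have h1 : mink_adj (invmx M) *m M = 1%:M.
  by rewrite -{2}hM -adjM mulmxV // adj1.
by rewrite -[LHS]mulmx1 -(mulmxV uM) mulmxA h1 mul1mx.
Qed.

Lemma mink_uniq p q (A : 'M[C]_(p, q)) X Z :
  is_mink_inverse A X -> is_mink_inverse A Z -> X = Z.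
Proof.
case=> h1 h2 h3 h4 [k1 k2 k3 k4].
have hA' : mink_adj A = mink_adj A *m mink_adj (A *m Z) by rewrite -adjM k1.
have hA'' : mink_adj A = mink_adj (X *m A) *m mink_adj A by rewrite -adjM mulmxA h1.
have eX : X = X *m A *m Z.
  transitivity (X *m mink_adj (A *m X) *m mink_adj (A *m Z)).
    rewrite [mink_adj (A *m X)]adjM.
    have -> : X *m (mink_adj X *m mink_adj A) *m mink_adj (A *m Z) = X *m (mink_adj X *m (mink_adj A *m mink_adj (A *m Z))) by rewrite !mulmxA.
    by rewrite -hA' -adjM h3 mulmxA h2.
  by rewrite h3 k3 !mulmxA h2.
have eZ : Z = X *m A *m Z.
  transitivity (mink_adj (X *m A) *m mink_adj (Z *m A) *m Z).
    rewrite [mink_adj (Z *m A)]adjM.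
    have -> : mink_adj (X *m A) *m (mink_adj A *m mink_adj Z) *m Z = mink_adj (X *m A) *m mink_adj A *m mink_adj Z *m Z by rewrite !mulmxA.
    by rewrite -hA'' -adjM k4 k2.
  by rewrite h4 k4 -[X *m A *m (Z *m A) *m Z]mulmxA k2.
by rewrite eX -eZ.
Qed.

End Helpers.

Lemma alg (F : fieldType) m n r (B : 'M[F]_(m,r)) (aB : 'M[F]_(r,m))
  (Cc : 'M[F]_(r,n)) (aC : 'M[F]_(n,r)) (A1 : 'M[F]_r) :
  A1 \in unitmx -> (aB *m B) \in unitmx -> (Cc *m aC) \in unitmx ->
  let A := B *m invmx A1 *m Cc in
  let Y := aC *m invmx (aB *m A *m aC) *m aB in
  [/\ A *m Y = B *m invmx (aB *m B) *m aB,
      Y *m A = aC *m invmx (Cc *m aC) *m Cc,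
      A *m Y *m A = A & Y *m A *m Y = Y].
Proof.
move=> u1 uB uC A Y.
set K := invmx (aB *m B); set L := invmx (Cc *m aC); set iA := invmx A1.
set P := aB *m A *m aC.
have hP : P *m (L *m A1 *m K) = 1%:M.
  have -> : P *m (L *m A1 *m K) = aB *m B *m iA *m (Cc *m aC *m L) *m A1 *m K.
    by rewrite /P /A !mulmxA.
  rewrite mulmxV // mulmx1 -(mulmxA (aB *m B)) mulVmx // mulmx1 mulmxV //.
have uP : P \in unitmx by case: (mulmx1_unit hP).
have iP : invmx P = L *m A1 *m K.
  by rewrite -[invmx P]mulmx1 -hP mulmxA mulVmx // mul1mx.
have eY : Y = aC *m L *m A1 *m K *m aB by rewrite /Y -/P iP !mulmxA.
have eAY : A *m Y = B *m K *m aB.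
  have -> : A *m Y = B *m iA *m (Cc *m aC *m L) *m A1 *m K *m aB.
    by rewrite eY /A !mulmxA.
  by rewrite mulmxV // mulmx1 -(mulmxA B) mulVmx // mulmx1.
have eYA : Y *m A = aC *m L *m Cc.
  have -> : Y *m A = aC *m L *m A1 *m (K *m (aB *m B)) *m iA *m Cc.
    by rewrite eY /A !mulmxA.
  by rewrite mulVmx // mulmx1 -(mulmxA (aC *m L)) mulmxV // mulmx1.
split => //.
  rewrite eAY.
  have -> : B *m K *m aB *m A = B *m (K *m (aB *m B)) *m iA *m Cc.
    by rewrite /A !mulmxA.
  by rewrite mulVmx // mulmx1.
rewrite eYA.
have -> : aC *m L *m Cc *m Y = aC *m (L *m (Cc *m aC)) *m L *m A1 *m K *m aB.
  by rewrite eY !mulmxA.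
by rewrite mulVmx // mulmx1 -eY.
Qed.

Theorem theorem8p5 (C : numClosedFieldType) (r m' n' : nat)
  (A1 : 'M[C]_r) (A2 : 'M[C]_(r, n')) (A3 : 'M[C]_(m', r)) (A4 : 'M[C]_(m', n')) :
  let A := block_mx A1 A2 A3 A4 in
  \rank A = r ->
  \rank (A *m mink_adj A) = r ->
  \rank (mink_adj A *m A) = r ->
  A1 \in unitmx ->
  forall X : 'M[C]_(r + n', r + m'),
    is_mink_inverse A X <->
    X = mink_adj (row_mx A1 A2)
        *m invmx (mink_adj (col_mx A1 A3) *m A *m mink_adj (row_mx A1 A2))
        *m mink_adj (col_mx A1 A3).
Proof.
move=> A rA rAA rAA' uA1 X.
set B := col_mx A1 A3; set Cc := row_mx A1 A2.
have rCc : \rank Cc = r.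
  apply/eqP; rewrite eqn_leq rank_leq_row /=.
  apply: leq_trans (mxrankM_maxl Cc (col_mx 1%:M 0)).
  by rewrite mul_row_col mulmx1 mulmx0 addr0 mxrank_unit.
have hA : A = B *m invmx A1 *m Cc.
  have sub : (Cc <= A)%MS by rewrite /A block_mxEv -addsmxE addsmxSl.
  have : (A <= Cc)%MS.
    by have := mxrank_leqif_sup sub; rewrite rA rCc => /geq_leqif; rewrite leqnn.
  case/submxP=> D hD.
  have hB : B = D *m A1.
    move: hD; rewrite /A block_mxEh /Cc mul_mx_row.
    by case/eq_row_mx.
  by rewrite hD hB mulmxK.
have uB : (mink_adj B *m B) \in unitmx.
  have e : mink_adj A *m A = (mink_adj Cc *m mink_adj (invmx A1)) *m (mink_adj B *m B) *m (invmx A1 *m Cc).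
    by rewrite hA !adjM !mulmxA.
  have le : (\rank (mink_adj A *m A) <= \rank (mink_adj B *m B))%N.
    by rewrite e; exact: leq_trans (mxrankM_maxl _ _) (mxrankM_maxr _ _).
  rewrite rAA' in le.
  by rewrite -row_free_unit /row_free eqn_leq rank_leq_row le.
have uC : (Cc *m mink_adj Cc) \in unitmx.
  have e : A *m mink_adj A = (B *m invmx A1) *m (Cc *m mink_adj Cc) *m (mink_adj (invmx A1) *m mink_adj B).
    by rewrite hA !adjM !mulmxA.
  have le : (\rank (A *m mink_adj A) <= \rank (Cc *m mink_adj Cc))%N.
    by rewrite e; exact: leq_trans (mxrankM_maxl _ _) (mxrankM_maxr _ _).
  rewrite rAA in le.
  by rewrite -row_free_unit /row_free eqn_leq rank_leq_row le.
have := @alg _ _ _ _ B (mink_adj B) Cc (mink_adj Cc) A1 uA1 uB uC => /=.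
rewrite -hA => -[eAY eYA e1 e2].
have hK : mink_adj (invmx (mink_adj B *m B)) = invmx (mink_adj B *m B).
  by apply: adj_inv => //; rewrite adjM adjK.
have hL : mink_adj (invmx (Cc *m mink_adj Cc)) = invmx (Cc *m mink_adj Cc).
  by apply: adj_inv => //; rewrite adjM adjK.
set Y := _ *m _ *m mink_adj B.
have hY : is_mink_inverse A Y.
  split => //.
    by rewrite eAY adjM adjK adjM hK mulmxA.
  by rewrite eYA adjM adjM adjK hL mulmxA.
by split => [hX|->] //; exact: mink_uniq hX hY.
Qed.
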